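(* For any $(a,b,c,\lambda),(\bar a,\bar b,\bar c,\bar\lambda)\in(\mathbb F^\times)^4$ the following are equivalent: (i) $(a,b,c,\lambda)\approx(\bar a,\bar b,\bar c,\bar\lambda)$; (ii) there is a $\triangle_q$-module homomorphism $M_\lambda(a,b,c)\to M_{\bar\lambda}(\bar a,\bar b,\bar c)$ sending $m_0$ to $\bar m_0$; (iii) there is a $\triangle_q$-module homomorphism $M_{\bar\lambda}(\bar a,\bar b,\bar c)\to M_\lambda(a,b,c)$ sending $\bar m_0$ to $m_0$; (iv) there is a $\triangle_q$-module isomorphism $M_\lambda(a,b,c)\to M_{\bar\lambda}(\bar a,\bar b,\bar c)$ sending $m_0$ to $\bar m_0$; (v) there is a $\triangle_q$-module isomorphism $M_{\bar\lambda}(\bar a,\bar b,\bar c)\to M_\lambda(a,b,c)$ sending $\bar m_0$ to $m_0$.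
   Context: $\mathbb F$ is an algebraically closed field and $q\in\mathbb F^\times$ a root of unity of order $d\notin\{1,2,4\}$. $\sqrt{x}$ denotes a fixed square root. $\triangle_q$ is the unital associative $\mathbb F$-algebra with generators $A,B,C$ subject to: each of $A+\frac{qBC-q^{-1}CB}{q^2-q^{-2}}$, $B+\frac{qCA-q^{-1}AC}{q^2-q^{-2}}$, $C+\frac{qAB-q^{-1}BA}{q^2-q^{-2}}$ is central; $\alpha,\beta,\gamma$ are these times $q+q^{-1}$. For $(a,b,c,\lambda)\in(\mathbb F^\times)^4$, $i\in\mathbb N$: $\theta_i=a\lambda^{-1}q^{2i}+a^{-1}\lambda q^{-2i}$, $\theta_i^*=b\lambda^{-1}q^{2i}+b^{-1}\lambda q^{-2i}$, $\varphi_i=a^{-1}b^{-1}\lambda q(q^i-q^{-i})(\lambda^{-1}q^{i-1}-\lambda q^{1-i})(q^{-i}-abc\lambda^{-1}q^{i-1})(q^{-i}-abc^{-1}\lambda^{-1}q^{i-1})$. $M_\lambda(a,b,c)$ is the $\triangle_q$-module with basis $\{m_i\}_{i\in\mathbb N}$, $(A-\theta_i)m_i=m_{i+1}$, $(B-\theta_i^* )m_i=\varphi_im_{i-1}$, with $\alpha,\beta,\gamma$ acting as $(b+b^{-1})(c+c^{-1})+(a+a^{-1})(\lambda q+\lambda^{-1}q^{-1})$, $(c+c^{-1})(a+a^{-1})+(b+b^{-1})(\lambda q+\lambda^{-1}q^{-1})$, $(a+a^{-1})(b+b^{-1})+(c+c^{-1})(\lambda q+\lambda^{-1}q^{-1})$;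 $\{\bar m_i\}$ denotes the corresponding basis of $M_{\bar\lambda}(\bar a,\bar b,\bar c)$. $\{\pm1\}$ acts on $(\mathbb F^\times)^4$ by $(-1)\cdot(a,b,c,\lambda)=(-a,-b,-c,-\lambda)$; with $[\cdot]$ the $\{\pm1\}$-orbit, $\mathfrak S_4$ acts on the right by $[a,b,c,\lambda](1\,2)=[a,b,c^{-1},\lambda]$, $[a,b,c,\lambda](3\,4)=[a^{-1},b,c,\lambda]$, $[a,b,c,\lambda](2\,3)=[a/s,b/s,c/s,\lambda/s]$, $s=\sqrt{abc\lambda q}$; $\approx$ means the $\{\pm1\}$-orbits lie in the same $\mathfrak S_4$-orbit. *)

(* Defs.v *)
From HB Require Import structures.
From mathcomp Require Import all_boot all_order all_algebra.
From Stdlib Require Import Relations.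
Set Implicit Arguments. Unset Strict Implicit. Unset Printing Implicit Defensive.
Import Order.TTheory GRing.Theory Num.Theory.
Local Open Scope ring_scope.

Definition par (F : Type) := (F * F * F * F)%type.

Section Module.
Variables (F : closedFieldType) (q : F).

Definition pa (p : par F) := p.1.1.1.
Definition pb (p : par F) := p.1.1.2.
Definition pc (p : par F) := p.1.2.
Definition pl (p : par F) := p.2.

Definition theta (p : par F) (i : nat) : F :=
  pa p / pl p * q ^+ (2 * i) + (pa p)^-1 * pl p / q ^+ (2 * i).
Definition thetas (p : par F) (i : nat) : F :=
  pb p / pl p * q ^+ (2 * i) + (pb p)^-1 * pl p / q ^+ (2 * i).
Definition phi (p : par F) (i : nat) : F :=
  let a := pa p in let b := pb p in let c := pc p in let l := pl p in
  a^-1 * b^-1 * l * q * (q ^+ i - q ^- i)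
  * (l^-1 * (q ^+ i / q) - l * (q / q ^+ i))
  * (q ^- i - a * b * c / l * (q ^+ i / q))
  * (q ^- i - a * b / c / l * (q ^+ i / q)).

Definition gammav (p : par F) : F :=
  (pa p + (pa p)^-1) * (pb p + (pb p)^-1)
  + (pc p + (pc p)^-1) * (pl p * q + (pl p)^-1 * q^-1).

(* M_lambda(a,b,c) is modelled on {poly F}: the basis vector m_i is 'X^i. *)
Definition actA (p : par F) (v : {poly F}) : {poly F} :=
  \sum_(i < size v) v`_i *: (theta p i *: 'X^i + 'X^(i.+1)).
Definition actB (p : par F) (v : {poly F}) : {poly F} :=
  \sum_(i < size v) v`_i *: (thetas p i *: 'X^i + phi p i *: 'X^(i.-1)).
(* C is determined by the requirement that
   C + (qAB - q^-1 BA)/(q^2 - q^-2) acts as gamma/(q + q^-1). *)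
Definition actC (p : par F) (v : {poly F}) : {poly F} :=
  (gammav p / (q + q^-1)) *: v
  - (q^+2 - q^-2)^-1 *: (q *: actA p (actB p v) - q^-1 *: actB p (actA p v)).

Definition is_hom (p p' : par F) (f : {poly F} -> {poly F}) : Prop :=
  [/\ forall (k : F) (u v : {poly F}), f (k *: u + v) = k *: f u + f v,
      forall v, f (actA p v) = actA p' (f v),
      forall v, f (actB p v) = actB p' (f v) &
      forall v, f (actC p v) = actC p' (f v)].

Definition is_iso (p p' : par F) (f : {poly F} -> {poly F}) : Prop :=
  is_hom p p' f /\ bijective f.

(* The relation ~ : one step of the {+-1} action or of one of the
   generators (1 2), (3 4), (2 3) of S_4 (on representatives).  For
   (2 3) any square root s of abc lambda q may be used: the two choices
   differ by the {+-1} action. *)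
Definition approx_step (x y : par F) : Prop :=
  let: (a, b, c, l) := x in
  [\/ y = (- a, - b, - c, - l),
      y = (a, b, c^-1, l),
      y = (a^-1, b, c, l) |
      exists s : F, s ^+ 2 = a * b * c * l * q /\ y = (a / s, b / s, c / s, l / s)].

Definition approx : par F -> par F -> Prop := clos_refl_trans (par F) approx_step.

End Module.

(* Main.v *)
Require Import Defs.
From HB Require Import structures.
From mathcomp Require Import all_boot all_order all_algebra.
From mathcomp Require Import ring.
From Stdlib Require Import Relations.
Set Implicit Arguments. Unset Strict Implicit. Unset Printing Implicit Defensive.
Import GRing.Theory.
Local Open Scope ring_scope.

Section Lin.
Variable F : closedFieldType.

Definition lin (w : nat -> {poly F}) (v : {poly F}) : {poly F} :=
  \sum_(i < size v) v`_i *: w i.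

Lemma linE w (v : {poly F}) n : (size v <= n)%N -> lin w v = \sum_(i < n) v`_i *: w i.
Proof.
move=> hn; rewrite /lin (big_ord_widen n (fun i => v`_i *: w i) hn) big_mkcond /=.
apply: eq_bigr => i _; case: ifP => // /negbT; rewrite -leqNgt => hi.
by rewrite nth_default // scale0r.
Qed.

Definition islin (f : {poly F} -> {poly F}) :=
  forall (k : F) (u v : {poly F}), f (k *: u + v) = k *: f u + f v.

Lemma lin_lin w : islin (lin w).
Proof.
move=> k u v; set n := maxn (size u) (size v).
have hu : (size u <= n)%N by rewrite leq_maxl.
have hv : (size v <= n)%N by rewrite leq_maxr.
have huv : (size (k *: u + v)%R <= n)%N.
  apply: leq_trans (size_polyD _ _) _; rewrite geq_max hv andbT.
  exact: leq_trans (size_scale_leq _ _) hu.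
rewrite (linE _ huv) (linE _ hu) (linE _ hv) scaler_sumr -big_split /=.
apply: eq_bigr => i _; rewrite coefD coefZ scalerDl scalerA //.
Qed.

Lemma lin_X w (i : nat) : lin w 'X^i = w i.
Proof.
rewrite /lin size_polyXn big_ord_recr /= coefXn eqxx scale1r big1 ?add0r //.
move=> j _; rewrite coefXn.
by have /ltn_eqF -> : (j < i)%N by []; rewrite scale0r.
Qed.

Section L.
Variable f : {poly F} -> {poly F}.
Hypothesis hf : islin f.
Lemma islin0 : f 0 = 0.
Proof.
have := hf 1 0 0; rewrite !scale1r addr0 => /(congr1 (fun x => x - f 0)).
by rewrite subrr addrK => <-.
Qed.
Lemma islinD (u v : {poly F}) : f (u + v) = f u + f v.
Proof. by rewrite -{1}[u]scale1r hf scale1r. Qed.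
Lemma islinZ (k : F) (u : {poly F}) : f (k *: u) = k *: f u.
Proof. by rewrite -[k *: u]addr0 hf islin0 addr0. Qed.
Lemma islinN (u : {poly F}) : f (- u) = - f u.
Proof. by rewrite -scaleN1r islinZ scaleN1r. Qed.
Lemma islinB (u v : {poly F}) : f (u - v) = f u - f v.
Proof. by rewrite islinD islinN. Qed.
Lemma islin_sum n (k : nat -> F) (w : nat -> {poly F}) :
  f (\sum_(i < n) k i *: w i) = \sum_(i < n) k i *: f (w i).
Proof.
elim: n => [|n IH]; first by rewrite !big_ord0 islin0.
by rewrite !big_ord_recr /= islinD islinZ IH.
Qed.
Lemma islin_lin (v : {poly F}) : f v = lin (fun i => f 'X^i) v.
Proof.
by rewrite -{1}[v]coefK poly_def islin_sum.
Qed.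
End L.

Lemma islin_eq (f g : {poly F} -> {poly F}) : islin f -> islin g -> (forall i, f 'X^i = g 'X^i) ->
  forall v, f v = g v.
Proof.
move=> hf hg h v; rewrite (islin_lin hf) (islin_lin hg).
by rewrite /lin; apply: eq_bigr => i _; rewrite h.
Qed.

Lemma islin_comp (f g : {poly F} -> {poly F}) : islin f -> islin g -> islin (fun v => f (g v)).
Proof. by move=> hf hg k u v; rewrite hg hf. Qed.

End Lin.

Section Gen.
Variable F : closedFieldType.

Lemma Wgen (A B : {poly F} -> {poly F}) (hA : islin A) (hB : islin B)
  (n m0 m1 m2 : {poly F}) (t0 t1 t2 s1 s2 s3 f1 f2 f3 rr K G Bt : F) :
  A n = t0 *: n + f1 *: m0 -> A m0 = t1 *: m0 + m1 -> A m1 = t2 *: m1 + m2 ->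
  B m0 = s1 *: m0 + n -> B m1 = s2 *: m1 + f2 *: m0 -> B m2 = s3 *: m2 + f3 *: m1 ->
  A (A (B m0)) - rr *: A (B (A m0)) + B (A (A m0)) + K *: B m0 + G *: A m0 - Bt *: m0
  = (t0 ^+ 2 - rr * t0 * t1 + t1 ^+ 2 + K) *: n
  + (s1 * t1 ^+ 2 + f1 * (t0 + t1) - rr * (t1 ^+ 2 * s1 + t1 * f1 + t1 * f2)
     + t1 ^+ 2 * s1 + (t1 + t2) * f2 + K * s1 + G * t1 - Bt) *: m0
  + (s1 * (t1 + t2) + f1 - rr * (t1 * s1 + s2 * t2 + f2) + (t1 + t2) * s2 + f3 + G) *: m1
  + (s1 - rr * s2 + s3) *: m2.
Proof.
move=> hAn hA0 hA1 hB0 hB1 hB2.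
rewrite hB0 hA0.
do 4 rewrite ?(islinD hA, islinZ hA, islinD hB, islinZ hB) ?(hAn, hA0, hA1, hB0, hB1, hB2).
rewrite -!mul_polyC.
rewrite !(polyCD, polyCM, polyCB, polyCN, polyC_exp).
ring.
Qed.

End Gen.

Section Scal.
Variables (F : closedFieldType) (q : F).
Hypotheses (hq : q != 0) (hq2 : q * q + 1 != 0).
Variables (a b c l : F).
Hypotheses (ha : a != 0) (hb : b != 0) (hc : c != 0) (hl : l != 0).

Definition TH Q := a / l * Q ^+ 2 + a^-1 * l / Q ^+ 2.
Definition TS Q := b / l * Q ^+ 2 + b^-1 * l / Q ^+ 2.
Definition PH Q := a^-1 * b^-1 * l * q * (Q - Q^-1)
  * (l^-1 * (Q / q) - l * (q / Q))
  * (Q^-1 - a * b * c / l * (Q / q))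
  * (Q^-1 - a * b / c / l * (Q / q)).
Definition gam := (a + a^-1) * (b + b^-1) + (c + c^-1) * (l * q + l^-1 * q^-1).
Definition bet := (c + c^-1) * (a + a^-1) + (b + b^-1) * (l * q + l^-1 * q^-1).
Definition rr := q ^+ 2 + q ^- 2.
Definition kap := q ^+ 2 - q ^- 2.
Definition GG := kap * (q - q^-1) * (gam / (q + q^-1)).
Definition BB := kap ^+ 2 * (bet / (q + q^-1)).

Variable Q : F.
Hypothesis hQ : Q != 0.

Ltac fld := rewrite /TH /TS /PH /GG /BB /gam /bet /rr /kap; field;
  by rewrite ?hq ?hq2 ?ha ?hb ?hc ?hl ?hQ.

Lemma cm1 : TH (Q / q) ^+ 2 - rr * TH (Q / q) * TH Q + TH Q ^+ 2 + kap ^+ 2 = 0.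
Proof. fld. Qed.
Lemma cc2 : TS Q - rr * TS (Q * q) + TS (Q * q * q) = 0.
Proof. fld. Qed.
Lemma cc1 : let t1 := TH Q in let t2 := TH (Q * q) in
  let s1 := TS Q in let s2 := TS (Q * q) in
  let f1 := PH Q in let f2 := PH (Q * q) in let f3 := PH (Q * q * q) in
  s1 * (t1 + t2) + f1 - rr * (t1 * s1 + s2 * t2 + f2) + (t1 + t2) * s2 + f3 + GG = 0.
Proof. fld. Qed.
Lemma cc0 : let t0 := TH (Q / q) in let t1 := TH Q in let t2 := TH (Q * q) in
  let s1 := TS Q in let f1 := PH Q in let f2 := PH (Q * q) in
  s1 * t1 ^+ 2 + f1 * (t0 + t1) - rr * (t1 ^+ 2 * s1 + t1 * f1 + t1 * f2)
     + t1 ^+ 2 * s1 + (t1 + t2) * f2 + kap ^+ 2 * s1 + GG * t1 - BB = 0.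
Proof. fld. Qed.
End Scal.

Section Mod.
Variables (F : closedFieldType) (q : F).
Hypotheses (hq : q != 0) (hq2 : q * q + 1 != 0).

Lemma actA_lin p : islin (actA q p).
Proof. change (islin (lin (fun i => theta q p i *: 'X^i + 'X^(i.+1)))); exact: lin_lin. Qed.
Lemma actB_lin p : islin (actB q p).
Proof. change (islin (lin (fun i => thetas q p i *: 'X^i + phi q p i *: 'X^(i.-1)))); exact: lin_lin. Qed.
Lemma actA_X p i : actA q p 'X^i = theta q p i *: 'X^i + 'X^(i.+1).
Proof. change (lin (fun i => theta q p i *: 'X^i + 'X^(i.+1)) 'X^i = theta q p i *: 'X^i + 'X^(i.+1)); exact: lin_X. Qed.
Lemma actB_X p i : actB q p 'X^i = thetas q p i *: 'X^i + phi q p i *: 'X^(i.-1).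
Proof. change (lin (fun i => thetas q p i *: 'X^i + phi q p i *: 'X^(i.-1)) 'X^i = thetas q p i *: 'X^i + phi q p i *: 'X^(i.-1)); exact: lin_X. Qed.
Lemma phi0 p : phi q p 0 = 0.
Proof. by rewrite /phi expr0 invr1 subrr !(mulr0, mul0r). Qed.
End Mod.

Section W.
Variables (F : closedFieldType) (q : F).
Hypotheses (hq : q != 0) (hq2 : q * q + 1 != 0).

Definition betav (p : par F) := (pc p + (pc p)^-1) * (pa p + (pa p)^-1)
  + (pb p + (pb p)^-1) * (pl p * q + (pl p)^-1 * q^-1).
Definition GGp p := kap q * (q - q^-1) * (gammav q p / (q + q^-1)).
Definition BBp p := kap q ^+ 2 * (betav p / (q + q^-1)).
Definition Wop p v :=
  actA q p (actA q p (actB q p v)) - rr q *: actA q p (actB q p (actA q p v))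
  + actB q p (actA q p (actA q p v)) + kap q ^+ 2 *: actB q p v
  + GGp p *: actA q p v - BBp p *: v.

Variables (a b c l : F).
Hypotheses (ha : a != 0) (hb : b != 0) (hc : c != 0) (hl : l != 0).

Lemma thetaE i : theta q (a, b, c, l) i = TH a l (q ^+ i).
Proof. by rewrite /theta /TH /= -exprM mulnC. Qed.
Lemma thetasE i : thetas q (a, b, c, l) i = TS b l (q ^+ i).
Proof. by rewrite /thetas /TS /= -exprM mulnC. Qed.
Lemma phiE i : phi q (a, b, c, l) i = PH q a b c l (q ^+ i).
Proof. by []. Qed.
Lemma GGE : GGp (a, b, c, l) = GG q a b c l.
Proof. by []. Qed.
Lemma BBE : BBp (a, b, c, l) = BB q a b c l.
Proof. by []. Qed.

Lemma PH1 : PH q a b c l 1 = 0.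
Proof. by rewrite /PH invr1 subrr !(mulr0, mul0r). Qed.

Lemma Wop_X i : Wop (a, b, c, l) 'X^i = 0.
Proof.
set p := (a, b, c, l).
have hA := actA_lin q p; have hB := actB_lin q p.
case: i => [|k].
  have e1 : actA q p (phi q p 0 *: 'X^0) = TH a l q^-1 *: (phi q p 0 *: 'X^0) + phi q p 0 *: 'X^0.
    by rewrite phi0 !scale0r scaler0 (islin0 hA) addr0.
  have e2 := actA_X q p 0; have e3 := actA_X q p 1.
  have e4 := actB_X q p 0; have e5 := actB_X q p 1; have e6 := actB_X q p 2.
  rewrite /= in e4 e5 e6.
  rewrite /Wop (Wgen hA hB _ _ _ _ e1 e2 e3 e4 e5 e6).
  have h0 := cc0 hq hq2 ha hb hc hl (oner_neq0 F).
  have h1 := cc1 hq hq2 ha hb hc hl (oner_neq0 F).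
  have h2 := cc2 hq hb hl (oner_neq0 F).
  rewrite /= !mul1r -?expr2 in h0 h1 h2.
  rewrite !thetaE !thetasE !phiE GGE BBE expr0 expr1.
  rewrite h0 h1 h2 PH1 !scale0r !addr0.
  by rewrite scaler0.
have e1 : actA q p (phi q p k.+1 *: 'X^k) = theta q p k *: (phi q p k.+1 *: 'X^k) + phi q p k.+1 *: 'X^(k.+1).
  rewrite (islinZ hA) actA_X scalerDr !scalerA.
  by rewrite [theta _ _ _ * _]mulrC.
have e2 := actA_X q p k.+1; have e3 := actA_X q p k.+2.
have e4 := actB_X q p k.+1; have e5 := actB_X q p k.+2; have e6 := actB_X q p k.+3.
rewrite /= in e4 e5 e6.
rewrite /Wop (Wgen hA hB _ _ _ _ e1 e2 e3 e4 e5 e6).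
have hQ : q ^+ k.+1 != 0 by rewrite expf_neq0.
have eq : q ^+ k.+1 / q = q ^+ k by rewrite exprSr mulfK.
have hm := cm1 hq ha hl hQ.
have h0 := cc0 hq hq2 ha hb hc hl hQ.
have h1 := cc1 hq hq2 ha hb hc hl hQ.
have h2 := cc2 hq hb hl hQ.
rewrite /= eq -?exprSr in hm h0 h1 h2.
rewrite !thetaE !thetasE !phiE GGE BBE.
by rewrite hm h0 h1 h2 !scale0r !addr0.
Qed.

Lemma Wop_lin : islin (Wop (a, b, c, l)).
Proof.
have hA := actA_lin q (a, b, c, l); have hB := actB_lin q (a, b, c, l).
move=> k u v; rewrite /Wop.
rewrite !(hA, hB, islinD hA, islinZ hA, islinD hB, islinZ hB).
rewrite -!mul_polyC; ring.
Qed.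

Lemma Wop0 v : Wop (a, b, c, l) v = 0.
Proof.
have h0 : islin (fun _ : {poly F} => (0 : {poly F})).
  by move=> k u w; rewrite scaler0 addr0.
exact: (islin_eq Wop_lin h0 Wop_X).
Qed.
End W.

Section Tr.
Variables (F : closedFieldType) (q : F).

Fixpoint gg (p p' : par F) (i : nat) : {poly F} :=
  match i with 0 => 1 | i.+1 => actA q p' (gg p p' i) - theta q p i *: gg p p' i end.
Definition tr p p' := lin (gg p p').

Lemma tr_lin p p' : islin (tr p p').
Proof. exact: lin_lin. Qed.

Lemma tr1 p p' : tr p p' 1 = 1.
Proof. by have := lin_X (gg p p') 0; rewrite expr0. Qed.

Lemma trA p p' v : tr p p' (actA q p v) = actA q p' (tr p p' v).
Proof.
have h1 : islin (fun v => tr p p' (actA q p v)) := islin_comp (tr_lin p p') (actA_lin q p).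
have h2 : islin (fun v => actA q p' (tr p p' v)) := islin_comp (actA_lin q p') (tr_lin p p').
apply: (islin_eq h1 h2) => i /=.
rewrite actA_X (islinD (tr_lin p p')) (islinZ (tr_lin p p')) /tr !lin_X /=.
by rewrite addrC subrK.
Qed.

Lemma idA p h : islin h -> (forall v, h (actA q p v) = actA q p (h v)) -> h 1 = 1 ->
  forall v, h v = v.
Proof.
move=> hh hA h1.
have hid : islin (fun v : {poly F} => v) by [].
apply: (islin_eq hh hid) => i /=.
elim: i => [|i IH]; first by rewrite expr0.
have e : 'X^(i.+1) = actA q p 'X^i - theta q p i *: 'X^i.
  by rewrite actA_X addrC addKr.
by rewrite e (islinB hh) (islinZ hh) hA IH.
Qed.

Lemma tr_bij p p' : bijective (tr p p').
Proof.
exists (tr p' p).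
  apply: (idA (p := p)).
  - exact: islin_comp (tr_lin _ _) (tr_lin _ _).
  - by move=> v; rewrite !trA.
  - by rewrite !tr1.
apply: (idA (p := p')).
- exact: islin_comp (tr_lin _ _) (tr_lin _ _).
- by move=> v; rewrite !trA.
- by rewrite !tr1.
Qed.

End Tr.

Section TrB.
Variables (F : closedFieldType) (q : F).
Hypotheses (hq : q != 0) (hq2 : q * q + 1 != 0).
Variables (a b c l a' b' c' l' : F).
Hypotheses (ha : a != 0) (hb : b != 0) (hc : c != 0) (hl : l != 0).
Hypotheses (ha' : a' != 0) (hb' : b' != 0) (hc' : c' != 0) (hl' : l' != 0).
Local Notation p := (a, b, c, l).
Local Notation p' := (a', b', c', l').
Hypotheses (hs0 : thetas q p 0 = thetas q p' 0) (hs1 : thetas q p 1 = thetas q p' 1)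
  (hT : phi q p 1 + theta q p 0 * (thetas q p 0 - thetas q p 1)
      = phi q p' 1 + theta q p' 0 * (thetas q p' 0 - thetas q p' 1))
  (hg : gammav q p = gammav q p') (hbt : betav q p = betav q p').

Local Notation T := (tr q p p').
Let D v := actB q p' (T v) - T (actB q p v).

Lemma D_lin : islin D.
Proof.
have hTl := tr_lin q p p'; have hB := actB_lin q p; have hB' := actB_lin q p'.
move=> k u v; rewrite /D !(hB, hTl, hB').
rewrite -!mul_polyC; ring.
Qed.

Lemma Drel v : actA q p' (actA q p' (D v)) - rr q *: actA q p' (D (actA q p v))
  + D (actA q p (actA q p v)) + kap q ^+ 2 *: D v = 0.
Proof.
have hTl := tr_lin q p p'; have hA' := actA_lin q p'.
have E : actA q p' (actA q p' (D v)) - rr q *: actA q p' (D (actA q p v))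
  + D (actA q p (actA q p v)) + kap q ^+ 2 *: D v
  = Wop q p' (T v) - T (Wop q p v).
  rewrite /D /Wop.
  rewrite !(islinB hTl, islinD hTl, islinZ hTl, islinB hA', islinD hA', islinZ hA').
  rewrite !trA /GGp /BBp hg hbt.
  rewrite -!mul_polyC; ring.
by rewrite E !Wop0 // (islin0 hTl) subr0.
Qed.


Lemma actA_1 pp : actA q pp 1 = theta q pp 0 *: 1 + 'X^1.
Proof. by rewrite -(expr0 'X) actA_X. Qed.
Lemma actB_1 pp : actB q pp 1 = thetas q pp 0 *: 1.
Proof. by rewrite -(expr0 'X) actB_X phi0 scale0r addr0. Qed.

Lemma D0 : D 1 = 0.
Proof.
have hTl := tr_lin q p p'.
rewrite /D tr1 !actB_1 (islinZ hTl) tr1 hs0.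
exact: subrr.
Qed.

Lemma D1 : D 'X^1 = 0.
Proof.
have hTl := tr_lin q p p'; have hB' := actB_lin q p'.
have eX : 'X^1 = actA q p 1 - theta q p 0 *: 1 by rewrite actA_1 addrC addKr.
have eT1 : T 'X^1 = theta q p' 0 *: 1 + 'X^1 - theta q p 0 *: 1.
  by rewrite {1}eX (islinB hTl) (islinZ hTl) trA tr1 actA_1.
have hf : phi q p' 1 = phi q p 1 + theta q p 0 * (thetas q p 0 - thetas q p 1)
   - theta q p' 0 * (thetas q p' 0 - thetas q p' 1) by rewrite hT addrK.
rewrite /D actB_X /= expr0 (islinD hTl) (islinZ hTl) (islinZ hTl) tr1 eT1.
rewrite !(islinB hB', islinD hB', islinZ hB') actB_X /= expr0 !actB_1 hf -hs0 -hs1.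
rewrite -!mul_polyC; ring.
Qed.

Lemma Dall i : D 'X^i = 0 /\ D 'X^(i.+1) = 0.
Proof.
have hD := D_lin; have hA := actA_lin q p; have hA' := actA_lin q p'.
elim: i => [|i [IH1 IH2]]; first by rewrite expr0 D0 expr1 -[X in D X](expr1 'X) D1.
split => //.
have h := Drel 'X^i.
rewrite !actA_X !(islinD hA, islinZ hA) !actA_X in h.
rewrite !(islinD hD, islinZ hD) IH1 IH2 (islin0 hA') !scaler0 !(add0r, addr0, subr0) in h.
by rewrite (islin0 hA') !scaler0 !(add0r, addr0, subr0, oppr0) in h.
Qed.

Lemma trB v : T (actB q p v) = actB q p' (T v).
Proof.
have h1 : islin (fun v => T (actB q p v)) := islin_comp (tr_lin q p p') (actB_lin q p).
have h2 : islin (fun v => actB q p' (T v)) := islin_comp (actB_lin q p') (tr_lin q p p').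
apply: (islin_eq h1 h2) => i /=.
by apply/esym/subr0_eq; case: (Dall i).
Qed.

Lemma trC v : T (actC q p v) = actC q p' (T v).
Proof.
have hTl := tr_lin q p p'.
rewrite /actC !(islinB hTl, islinZ hTl) !trA !trB !trA hg.
done.
Qed.

End TrB.

Lemma lin_poly_eq (F : fieldType) (c0 c1 d0 d1 : F) :
  c0%:P + c1%:P * 'X = d0%:P + d1%:P * 'X -> c0 = d0 /\ c1 = d1.
Proof.
move=> h; split.
  by have := congr1 (fun P : {poly F} => P`_0) h; rewrite !coefD !coefC !coefCM coefX /= !mulr0 !addr0.
by have := congr1 (fun P : {poly F} => P`_1) h; rewrite !coefD !coefC !coefCM coefX /= !mulr1 !add0r.
Qed.

Section Nec.
Variables (F : closedFieldType) (q : F).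
Hypotheses (hq : q != 0) (hq2 : q * q + 1 != 0).
Variables (a b c l a' b' c' l' : F).
Hypotheses (ha : a != 0) (hb : b != 0) (hc : c != 0) (hl : l != 0).
Hypotheses (ha' : a' != 0) (hb' : b' != 0) (hc' : c' != 0) (hl' : l' != 0).
Local Notation p := (a, b, c, l).
Local Notation p' := (a', b', c', l').
Variable f : {poly F} -> {poly F}.
Hypotheses (hf : is_hom q p p' f) (f1 : f 1 = 1).

Lemma qq_neq0 : q + q^-1 != 0.
Proof.
have -> : q + q^-1 = (q * q + 1) / q by field.
by rewrite mulf_neq0 // invr_eq0.
Qed.

Lemma nec_s0 : thetas q p 0 = thetas q p' 0.
Proof.
case: hf => hlin hA hB hC.
have := hB 1; rewrite f1 !actB_1 (islinZ hlin) f1 -!mul_polyC !mulr1.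
exact: polyC_inj.
Qed.

Lemma fX : f 'X = (theta q p' 0 - theta q p 0)%:P + 'X.
Proof.
case: hf => hlin hA hB hC.
have eX : 'X = actA q p 1 - theta q p 0 *: 1 by rewrite actA_1 expr1 addrC addKr.
rewrite {1}eX (islinB hlin) (islinZ hlin) hA f1 actA_1 expr1 -!mul_polyC polyCB.
ring.
Qed.

Lemma actB_C pp (k : F) : actB q pp k%:P = (k * thetas q pp 0)%:P.
Proof.
by rewrite -[k%:P]mulr1 mul_polyC (islinZ (actB_lin q pp)) actB_1 -!mul_polyC mulr1 polyCM.
Qed.
Lemma actB_X1 pp : actB q pp 'X = thetas q pp 1 *: 'X + phi q pp 1 *: 1.
Proof. by rewrite -(expr1 'X) actB_X /= expr0. Qed.

Lemma nec_s1T : thetas q p 1 = thetas q p' 1 /\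
  phi q p 1 + theta q p 0 * (thetas q p 0 - thetas q p 1)
      = phi q p' 1 + theta q p' 0 * (thetas q p' 0 - thetas q p' 1).
Proof.
have hs0 := nec_s0.
case: hf => hlin hA hB hC.
have hB' := actB_lin q p'.
have := hB 'X^1.
rewrite actB_X /= expr0 expr1 (islinD hlin) !(islinZ hlin) f1 fX.
rewrite !(islinD hB', islinZ hB') actB_C actB_X1 => h.
set d := theta q p' 0 - theta q p 0.
have [h0 h1] : thetas q p 1 * d + phi q p 1 = d * thetas q p' 0 + phi q p' 1
   /\ thetas q p 1 = thetas q p' 1.
  apply: lin_poly_eq.
  have e1 : (thetas q p 1 * d + phi q p 1)%:P + (thetas q p 1)%:P * 'X
     = thetas q p 1 *: (d%:P + 'X) + phi q p 1 *: 1.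
    by rewrite -!mul_polyC !(polyCD, polyCM) mulr1; ring.
  have e2 : (d * thetas q p' 0 + phi q p' 1)%:P + (thetas q p' 1)%:P * 'X
     = (d * thetas q p' 0)%:P + (thetas q p' 1 *: 'X + phi q p' 1 *: 1).
    by rewrite -!mul_polyC !(polyCD, polyCM) mulr1; ring.
  by rewrite e1 e2.
split => //.
rewrite -h1 -hs0 in h0 *.
have -> : phi q p' 1 = thetas q p 1 * d + phi q p 1 - d * thetas q p 0 by rewrite h0; ring.
rewrite /d; ring.
Qed.

Lemma nec_g : gammav q p = gammav q p'.
Proof.
case: hf => hlin hA hB hC.
have := hC 1.
rewrite /actC !(islinB hlin, islinZ hlin) !hA !hB !hA f1.
move/addIr; rewrite -!mul_polyC !mulr1 => /polyC_inj.
exact: (mulIf (invr_neq0 qq_neq0)).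
Qed.

Lemma sub_same (X : {poly F}) (u v : F) : X - u *: 1 = 0 -> X - v *: 1 = 0 -> u = v.
Proof.
move=> /subr0_eq h1 /subr0_eq h2; move: h1; rewrite h2 -!mul_polyC !mulr1.
by move/polyC_inj.
Qed.

Hypothesis hkap : kap q != 0.

Lemma nec_b : betav q p = betav q p'.
Proof.
have hg := nec_g.
case: hf => hlin hA hB hC.
have := congr1 f (Wop0 hq hq2 ha hb hc hl 1).
rewrite (islin0 hlin) /Wop !(islinB hlin, islinD hlin, islinZ hlin) ?(hA, hB) ?(hA, hB) ?(hA, hB) ?(hA, hB) f1.
move=> h.
have h2 := Wop0 hq hq2 ha' hb' hc' hl' 1.
rewrite /Wop in h2.
rewrite /GGp hg in h; rewrite /GGp in h2.
have := sub_same h h2; rewrite /BBp => /(mulfI (expf_neq0 2 hkap)).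
exact: (mulIf (invr_neq0 qq_neq0)).
Qed.
End Nec.

Section Inv.
Variables (F : closedFieldType) (q : F).
Hypotheses (hq : q != 0) (hq2 : q * q + 1 != 0).

Definition xx (p : par F) : F := pb p / pl p.
Definition U (p : par F) : seq F :=
  [:: pc p / pl p; (pc p * pl p)^-1; pa p * pb p * q; pb p * q / pa p].
Definition E1 (u : seq F) : F := match u with [:: u1; u2; u3; u4] => u1 + u2 + u3 + u4 | _ => 0 end.
Definition E2 (u : seq F) : F := match u with [:: u1; u2; u3; u4] =>
  u1 * u2 + u1 * u3 + u1 * u4 + u2 * u3 + u2 * u4 + u3 * u4 | _ => 0 end.
Definition E3 (u : seq F) : F := match u with [:: u1; u2; u3; u4] =>
  u1 * u2 * u3 + u1 * u2 * u4 + u1 * u3 * u4 + u2 * u3 * u4 | _ => 0 end.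

Variables (a b c l : F).
Hypotheses (ha : a != 0) (hb : b != 0) (hc : c != 0) (hl : l != 0).
Local Notation p := (a, b, c, l).

Ltac fld2 := rewrite /xx /U /E1 /E2 /E3 /pa /pb /pc /pl /= ?muln0 ?muln1 ?expr0 ?expr1 ?expr2; field;
  by rewrite ?hq ?hq2 ?ha ?hb ?hc ?hl ?oner_neq0.

Lemma ths0E : thetas q p 0 = xx p + (xx p)^-1.
Proof. rewrite /thetas. fld2. Qed.
Lemma ths1E : thetas q p 1 = xx p * q ^+ 2 + (xx p * q ^+ 2)^-1.
Proof. rewrite /thetas. fld2. Qed.
Lemma gamE : gammav q p = (E1 (U p) + E3 (U p) / xx p ^+ 2) / q.
Proof. rewrite /gammav. fld2. Qed.
Lemma betE : betav q p = (E2 (U p) + xx p ^+ 2 + q ^+ 2) / (xx p * q).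
Proof. rewrite /betav. fld2. Qed.
Lemma T3E : phi q p 1 + theta q p 0 * (thetas q p 0 - thetas q p 1)
  = (q - q^-1) * (E3 (U p) - xx p ^+ 2 * q ^+ 2 * E1 (U p)) / (xx p ^+ 2 * q ^+ 2).
Proof. rewrite /phi /theta /thetas. fld2. Qed.
Lemma prodU : \prod_(z <- U p) ('X - z%:P) =
  'X^4 - (E1 (U p))%:P * 'X^3 + (E2 (U p))%:P * 'X^2 - (E3 (U p))%:P * 'X
  + (xx p ^+ 2 * q ^+ 2)%:P.
Proof.
have -> : xx p ^+ 2 * q ^+ 2 = c / l * (c * l)^-1 * (a * b * q) * (b * q / a) by fld2.
rewrite /U /E1 /E2 /E3 /= !big_cons big_nil.
rewrite !(polyCD, polyCM, polyCB, polyCN); ring.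
Qed.
End Inv.

Section Two.
Variables (F : closedFieldType) (q : F).
Hypotheses (hq : q != 0) (hq2 : q * q + 1 != 0) (hq4 : q ^+ 4 != 1) (hqm : q - q^-1 != 0).
Variables (a b c l a' b' c' l' : F).
Hypotheses (ha : a != 0) (hb : b != 0) (hc : c != 0) (hl : l != 0).
Hypotheses (ha' : a' != 0) (hb' : b' != 0) (hc' : c' != 0) (hl' : l' != 0).
Local Notation p := (a, b, c, l).
Local Notation p' := (a', b', c', l').

Definition Jeq (r r' : par F) := [/\ xx r = xx r', E1 (U q r) = E1 (U q r'),
  E2 (U q r) = E2 (U q r') & E3 (U q r) = E3 (U q r')].
Definition Inv (r r' : par F) := [/\ thetas q r 0 = thetas q r' 0, thetas q r 1 = thetas q r' 1,
  phi q r 1 + theta q r 0 * (thetas q r 0 - thetas q r 1)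
      = phi q r' 1 + theta q r' 0 * (thetas q r' 0 - thetas q r' 1),
  gammav q r = gammav q r' & betav q r = betav q r'].

Lemma Jeq_Inv : Jeq p p' -> Inv p p'.
Proof.
rewrite /Jeq /Inv; case=> h0 h1 h2 h3; split.
- by rewrite !ths0E // h0.
- by rewrite !ths1E // h0.
- by rewrite !T3E // h0 h1 h3.
- by rewrite !gamE // h0 h1 h3.
- by rewrite !betE // h0 h2.
Qed.

Lemma xx_neq0 (x y z w : F) : y != 0 -> w != 0 -> xx (x, y, z, w) != 0.
Proof. by move=> hy hw; rewrite /xx /pb /pl /= mulf_neq0 // invr_eq0. Qed.

Lemma x_eq (x y : F) : x != 0 -> y != 0 -> x + x^-1 = y + y^-1 ->
  x * q ^+ 2 + (x * q ^+ 2)^-1 = y * q ^+ 2 + (y * q ^+ 2)^-1 -> x = y.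
Proof.
move=> hx hy e1 e2.
have f1 : (x - y) * (x * y - 1) = x * y * ((x + x^-1) - (y + y^-1)) by field; rewrite hx hy.
have f2 : (x - y) * (q ^+ 4 * x * y - 1)
   = x * y * q ^+ 2 * ((x * q ^+ 2 + (x * q ^+ 2)^-1) - (y * q ^+ 2 + (y * q ^+ 2)^-1)).
  by field; rewrite hx hy hq.
rewrite e1 subrr mulr0 in f1; rewrite e2 subrr mulr0 in f2.
case: (eqVneq x y) => // hne0.
have hne : x - y != 0 by rewrite subr_eq0.
move/eqP: f1; rewrite mulf_eq0 (negbTE hne) /= subr_eq0 => /eqP hxy.
move/eqP: f2; rewrite mulf_eq0 (negbTE hne) /= subr_eq0 -mulrA hxy mulr1.
by rewrite (negbTE hq4).
Qed.

Lemma Inv_Jeq : Inv p p' -> Jeq p p'.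
Proof.
rewrite /Inv /Jeq; case=> h0 h1 h3 hg hb2.
have hx0 := xx_neq0 a c hb hl; have hx0' := xx_neq0 a' c' hb' hl'.
have hx : xx p = xx p'.
  apply: x_eq => //.
    by move: h0; rewrite !ths0E.
  by move: h1; rewrite !ths1E.
rewrite !betE // -hx in hb2.
have e2 : E2 (U q p) = E2 (U q p').
  by move/(mulIf (invr_neq0 (mulf_neq0 hx0 hq))): hb2 => /addIr /addIr.
rewrite !gamE // -hx in hg.
move/(mulIf (invr_neq0 hq)): hg => hg.
rewrite !T3E // -hx in h3.
have hxq : xx p ^+ 2 * q ^+ 2 != 0 by rewrite mulf_neq0 // expf_neq0.
move/(mulIf (invr_neq0 hxq))/(mulfI hqm): h3 => h3.
set x := xx p in hg h3 hxq *.
set u1 := E1 (U q p) in hg h3 *; set u1' := E1 (U q p') in hg h3 *.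
set u3 := E3 (U q p) in hg h3 *; set u3' := E3 (U q p') in hg h3 *.
have hx2 : x != 0 by [].
have k : (u1 - u1') * (q * q + 1) = ((u1 + u3 / x ^+ 2) - (u1' + u3' / x ^+ 2))
   - ((u3 - x ^+ 2 * q ^+ 2 * u1) - (u3' - x ^+ 2 * q ^+ 2 * u1')) / x ^+ 2.
  by field.
rewrite hg h3 !subrr mul0r subrr in k.
have e1 : u1 = u1'.
  by apply/eqP; rewrite -subr_eq0; move/eqP: k; rewrite mulf_eq0 (negbTE hq2) orbF.
split => //.
rewrite -e1 in hg; move/addrI: hg.
exact: (mulIf (invr_neq0 (expf_neq0 2 hx2))).
Qed.
End Two.


Section Cl.
Variables (F : closedFieldType) (q : F).
Hypotheses (hq : q != 0).

Definition NZ (r : par F) := [/\ pa r != 0, pb r != 0, pc r != 0 & pl r != 0].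

Definition sw12 (u : seq F) := match u with [:: u1; u2; u3; u4] => [:: u2; u1; u3; u4] | _ => u end.
Definition sw23 (u : seq F) := match u with [:: u1; u2; u3; u4] => [:: u1; u3; u2; u4] | _ => u end.
Definition sw34 (u : seq F) := match u with [:: u1; u2; u3; u4] => [:: u1; u2; u4; u3] | _ => u end.

Lemma U_neg a b c l : a != 0 -> b != 0 -> c != 0 -> l != 0 ->
  U q (-a, -b, -c, -l) = U q (a, b, c, l).
Proof.
move=> ha hb hc hl; rewrite /U /pa /pb /pc /pl /=.
by congr [:: _; _; _; _]; field; rewrite ?oppr_eq0 ?ha ?hb ?hc ?hl.
Qed.

Lemma U_12 a b c l : a != 0 -> b != 0 -> c != 0 -> l != 0 ->
  U q (a, b, c^-1, l) = sw12 (U q (a, b, c, l)).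
Proof.
move=> ha hb hc hl; rewrite /U /pa /pb /pc /pl /=.
by congr [:: _; _; _; _]; field; rewrite ?invr_eq0 ?ha ?hb ?hc ?hl ?oner_neq0.
Qed.

Lemma U_34 a b c l : a != 0 -> b != 0 -> c != 0 -> l != 0 ->
  U q (a^-1, b, c, l) = sw34 (U q (a, b, c, l)).
Proof.
move=> ha hb hc hl; rewrite /U /pa /pb /pc /pl /=.
by congr [:: _; _; _; _]; field; rewrite ?invr_eq0 ?ha ?hb ?hc ?hl ?oner_neq0.
Qed.

Lemma U_23 a b c l s : a != 0 -> b != 0 -> c != 0 -> l != 0 -> s != 0 ->
  s ^+ 2 = a * b * c * l * q ->
  U q (a / s, b / s, c / s, l / s) = sw23 (U q (a, b, c, l)).
Proof.
move=> ha hb hc hl hs e; rewrite /U /pa /pb /pc /pl /=.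
congr [:: _; _; _; _].
- by field; rewrite ?ha ?hb ?hc ?hl ?hs ?oner_neq0.
- have -> : (c / s * (l / s))^-1 = s ^+ 2 / (c * l) by field; rewrite ?hc ?hl ?hs ?oner_neq0.
  by rewrite e; field; rewrite ?hc ?hl ?oner_neq0.
- have -> : a / s * (b / s) * q = a * b * q / s ^+ 2 by field; rewrite ?hs ?oner_neq0.
  by rewrite e; field; rewrite ?ha ?hb ?hc ?hl ?hq ?oner_neq0.
- by field; rewrite ?ha ?hb ?hc ?hl ?hs ?oner_neq0.
Qed.

Lemma step_inv r r' : NZ r -> approx_step q r r' ->
  [/\ NZ r', xx r' = xx r &
     [\/ U q r' = U q r, U q r' = sw12 (U q r), U q r' = sw34 (U q r) | U q r' = sw23 (U q r)]].
Proof.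
case: r => [[[a b] c] l]; rewrite /NZ /pa /pb /pc /pl /= => -[ha hb hc hl].
case.
- move=> ->; split; rewrite /xx /pb /pl /= ?oppr_eq0 //; first by rewrite invrN mulrNN.
  by constructor 1; rewrite U_neg.
- move=> ->; split; rewrite /xx /pb /pl /= ?invr_eq0 //.
  by constructor 2; rewrite U_12.
- move=> ->; split; rewrite /xx /pb /pl /= ?invr_eq0 //.
  by constructor 3; rewrite U_34.
- move=> [s [hs ->]].
  have hs0 : s != 0.
    apply/negP => /eqP h0; move: hs; rewrite h0 expr0n /= => /eqP.
    by rewrite eq_sym !mulf_eq0 (negbTE ha) (negbTE hb) (negbTE hc) (negbTE hl) (negbTE hq).
  split; rewrite /xx /pb /pl /= ?mulf_neq0 ?invr_eq0 //.
    by field; rewrite ?hl ?hs0.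
  by constructor 4; rewrite U_23.
Qed.

Lemma E_perm (u : seq F) : size u = 4%N ->
  let P v := [/\ E1 v = E1 u, E2 v = E2 u & E3 v = E3 u] in
  [/\ P u, P (sw12 u), P (sw34 u) & P (sw23 u)].
Proof.
case: u => [|u1 [|u2 [|u3 [|u4 [|]]]]] //= _.
by rewrite /E1 /E2 /E3 /=; split; split; ring.
Qed.

Lemma size_U r : size (U q r) = 4%N. Proof. by []. Qed.

Lemma approx_Jeq r r' : approx q r r' -> NZ r -> NZ r' /\ Jeq q r r'.
Proof.
elim.
- move=> x y hxy hx; have [hy hxx hU] := step_inv hx hxy.
  split => //; have [P1 P2 P3 P4] := E_perm (size_U x).
  rewrite /Jeq hxx.
  case: hU => ->; [by [] | case: P2 | case: P3 | case: P4] => -> -> ->; by [].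
- by move=> x hx; split => //.
- move=> x y z _ IH1 _ IH2 hx; have [hy [h1 h2 h3 h4]] := IH1 hx.
  have [hz [k1 k2 k3 k4]] := IH2 hy.
  by split => //; split; rewrite ?h1 ?h2 ?h3 ?h4.
Qed.
End Cl.

Section Perm.
Variable F : eqType.

Lemma myperm1 (x y : F) : perm_eq [:: x] [:: y] -> x = y.
Proof.
move=> h; have := perm_mem h y; rewrite !mem_seq1 eqxx => /eqP.
by move=> /eqP; rewrite eq_sym => /eqP.
Qed.

Lemma myperm2 (R : F -> F -> Prop) : (forall u v, R u v -> R v u) ->
  forall x1 x2 y1 y2, R x1 x2 -> perm_eq [:: x1; x2] [:: y1; y2] -> R y1 y2.
Proof.
move=> s12 x1 x2 y1 y2 hR hp.
have : y1 \in [:: x1; x2] by rewrite (perm_mem hp) mem_head.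
rewrite !inE => /orP [] /eqP e; subst y1.
  by move: hp; rewrite perm_cons => /myperm1 <-.
have hp' : perm_eq [:: x2; x1] [:: x2; y2].
  by apply: perm_trans hp; apply/permP => P /=; ring.
by move: hp'; rewrite perm_cons => /myperm1 <-; apply: s12.
Qed.

Lemma myperm3 (R : F -> F -> F -> Prop) : (forall u v w, R u v w -> R v u w) ->
  (forall u v w, R u v w -> R u w v) ->
  forall x1 x2 x3 y1 y2 y3, R x1 x2 x3 -> perm_eq [:: x1; x2; x3] [:: y1; y2; y3] ->
  R y1 y2 y3.
Proof.
move=> s12 s23 x1 x2 x3 y1 y2 y3 hR hp.
have : y1 \in [:: x1; x2; x3] by rewrite (perm_mem hp) mem_head.
rewrite !inE => /or3P [] /eqP e; subst y1.
- by move: hp; rewrite perm_cons; apply: myperm2 => //; apply: s23.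
- have hp' : perm_eq [:: x2; x1; x3] [:: x2; y2; y3].
    by apply: perm_trans hp; apply/permP => P /=; ring.
  by move: hp'; rewrite perm_cons; apply: myperm2 (s12 _ _ _ hR) => //; apply: s23.
- have hp' : perm_eq [:: x3; x1; x2] [:: x3; y2; y3].
    by apply: perm_trans hp; apply/permP => P /=; ring.
  move: hp'; rewrite perm_cons; apply: myperm2; first by move=> *; apply: s23.
  by apply: s12; apply: s23.
Qed.

Lemma myperm4 (R : F -> F -> F -> F -> Prop) : (forall u v w z, R u v w z -> R v u w z) ->
  (forall u v w z, R u v w z -> R u w v z) -> (forall u v w z, R u v w z -> R u v z w) ->
  forall x1 x2 x3 x4 y1 y2 y3 y4, R x1 x2 x3 x4 ->
  perm_eq [:: x1; x2; x3; x4] [:: y1; y2; y3; y4] -> R y1 y2 y3 y4.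
Proof.
move=> s12 s23 s34 x1 x2 x3 x4 y1 y2 y3 y4 hR hp.
have : y1 \in [:: x1; x2; x3; x4] by rewrite (perm_mem hp) mem_head.
have K : forall z2 z3 z4, R y1 z2 z3 z4 -> perm_eq [:: y1; z2; z3; z4] [:: y1; y2; y3; y4] ->
    R y1 y2 y3 y4.
  move=> z2 z3 z4 h; rewrite perm_cons; apply: myperm3 h.
    by move=> *; apply: s23.
  by move=> *; apply: s34.
rewrite !inE => /or4P [] /eqP e; subst y1.
- exact: K hR hp.
- apply: K (s12 _ _ _ _ hR) _.
  by apply: perm_trans hp; apply/permP => P /=; ring.
- apply: K (s12 _ _ _ _ (s23 _ _ _ _ hR)) _.
  by apply: perm_trans hp; apply/permP => P /=; ring.
- apply: K (s12 _ _ _ _ (s23 _ _ _ _ (s34 _ _ _ _ hR))) _.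
  by apply: perm_trans hp; apply/permP => P /=; ring.
Qed.
End Perm.

Section Class.
Variables (F : closedFieldType) (q : F).
Hypotheses (hq : q != 0).

Lemma sqrt_ex (z : F) : exists s, s ^+ 2 = z.
Proof.
have [s hs] := @solve_monicpoly F 2 (nth 0 [:: z]) isT.
by exists s; rewrite hs !big_ord_recl big_ord0 mul0r mulr1 !addr0.
Qed.

Definition Reach (r : par F) (u1 u2 u3 u4 : F) :=
  exists r', [/\ approx q r r', NZ r', xx r' = xx r & U q r' = [:: u1; u2; u3; u4]].

Lemma reach12 r u1 u2 u3 u4 : Reach r u1 u2 u3 u4 -> Reach r u2 u1 u3 u4.
Proof.
case=> [[[[a b] c] l] [hr [ha hb hc hl] hx hU]].
exists (a, b, c^-1, l); split.
- apply: rt_trans hr _; apply: rt_step; by constructor 2.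
- by split; rewrite /pa /pb /pc /pl /= ?invr_eq0.
- by rewrite -hx.
- by rewrite U_12 // hU.
Qed.

Lemma reach34 r u1 u2 u3 u4 : Reach r u1 u2 u3 u4 -> Reach r u1 u2 u4 u3.
Proof.
case=> [[[[a b] c] l] [hr [ha hb hc hl] hx hU]].
exists (a^-1, b, c, l); split.
- apply: rt_trans hr _; apply: rt_step; by constructor 3.
- by split; rewrite /pa /pb /pc /pl /= ?invr_eq0.
- by rewrite -hx.
- by rewrite U_34 // hU.
Qed.

Lemma reach23 r u1 u2 u3 u4 : Reach r u1 u2 u3 u4 -> Reach r u1 u3 u2 u4.
Proof.
case=> [[[[a b] c] l] [hr [ha hb hc hl] hx hU]].
rewrite /pa /pb /pc /pl /= in ha hb hc hl.
have [s hs] := sqrt_ex (a * b * c * l * q).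
have hs0 : s != 0.
  apply/negP => /eqP h0; move: hs; rewrite h0 expr0n /= => /eqP.
  by rewrite eq_sym !mulf_eq0 (negbTE ha) (negbTE hb) (negbTE hc) (negbTE hl) (negbTE hq).
exists (a / s, b / s, c / s, l / s); split.
- apply: rt_trans hr _; apply: rt_step; constructor 4; by exists s.
- by split; rewrite /pa /pb /pc /pl /= mulf_neq0 ?invr_eq0.
- rewrite -hx /xx /pb /pl /=; by field; rewrite hs0 hl.
- by rewrite (U_23 hq) // hU.
Qed.

Lemma same_U r r' : NZ r -> NZ r' -> xx r = xx r' -> U q r = U q r' -> approx q r r'.
Proof.
case: r => [[[a b] c] l]; case: r' => [[[a' b'] c'] l'].
rewrite /NZ /xx /U /pa /pb /pc /pl /= => -[ha hb hc hl] [ha' hb' hc' hl'] ex [e1 e2 e3 e4].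
have el : l ^+ 2 = l' ^+ 2.
  apply: invr_inj.
  have -> : (l ^+ 2)^-1 = c / l * (c * l)^-1 by field; rewrite hc hl.
  have -> : (l' ^+ 2)^-1 = c' / l' * (c' * l')^-1 by field; rewrite hc' hl'.
  by rewrite e1 e2.
move/eqP: el; rewrite eqf_sqr => /orP [] /eqP el.
- subst l'.
  have eb : b = b' by apply: (mulIf (invr_neq0 hl)).
  subst b'.
  have ec : c = c' by apply: (mulIf (invr_neq0 hl)).
  subst c'.
  have ea : a = a'.
    apply: (mulIf (mulf_neq0 hb hq)); transitivity (a * b * q); first by ring.
    by rewrite e3; ring.
  subst a'; exact: rt_refl.
- have el' : l' = - l by rewrite el opprK.
  subst l'.
  have eb : b' = - b.
    apply: (mulIf (invr_neq0 hl)); rewrite mulNr ex invrN mulrN opprK //.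
  have ec : c' = - c.
    apply: (mulIf (invr_neq0 hl)); rewrite mulNr e1 invrN mulrN opprK //.
  subst b' c'.
  have ea : a' = - a.
    apply: (mulIf (mulf_neq0 hb hq)); transitivity (- (a' * - b * q)); first by ring.
    by rewrite -e3; ring.
  subst a'; apply: rt_step; by constructor 1.
Qed.

Lemma Jeq_approx r r' : NZ r -> NZ r' -> Jeq q r r' -> approx q r r'.
Proof.
move=> hr hr' hJ.
have hp : perm_eq (U q r) (U q r').
  apply: prod_XsubC_eq.
  case: r hr hJ => [[[a b] c] l] [ha hb hc hl] hJ.
  case: r' hr' hJ => [[[a' b'] c'] l'] [ha' hb' hc' hl'] [h0 h1 h2 h3].
  by rewrite !prodU // h0 h1 h2 h3.
have hR : Reach r (pc r / pl r) ((pc r * pl r)^-1) (pa r * pb r * q) (pb r * q / pa r).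
  by exists r; split => //; exact: rt_refl.
move: hp; rewrite /U => hp.
have := myperm4 (@reach12 r) (@reach23 r) (@reach34 r) hR hp.
case=> r'' [h1 h2 h3 h4].
apply: rt_trans h1 _; apply: same_U => //.
  by case: hJ => <-.
Qed.
End Class.

Section Final.
Variables (F : closedFieldType) (q : F).
Hypotheses (hq : q != 0) (hq2 : q * q + 1 != 0) (hq4 : q ^+ 4 != 1)
  (hqm : q - q^-1 != 0) (hkap : kap q != 0).

Definition HOM (r r' : par F) := exists f, is_hom q r r' f /\ f 1 = 1.
Definition ISO (r r' : par F) := exists f, is_iso q r r' f /\ f 1 = 1.

Lemma hom_Jeq a b c l a' b' c' l' :
  a != 0 -> b != 0 -> c != 0 -> l != 0 -> a' != 0 -> b' != 0 -> c' != 0 -> l' != 0 ->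
  HOM (a, b, c, l) (a', b', c', l') -> Jeq q (a, b, c, l) (a', b', c', l').
Proof.
move=> ha hb hc hl ha' hb' hc' hl' [f [hf f1]].
apply: Inv_Jeq => //.
have [h1 h2] := nec_s1T hf f1.
split => //.
- by have := nec_s0 hf f1.
- by have := nec_g hq hq2 hf f1.
- by have := nec_b hq hq2 ha hb hc hl ha' hb' hc' hl' hf f1 hkap.
Qed.

Lemma Jeq_iso a b c l a' b' c' l' :
  a != 0 -> b != 0 -> c != 0 -> l != 0 -> a' != 0 -> b' != 0 -> c' != 0 -> l' != 0 ->
  Jeq q (a, b, c, l) (a', b', c', l') -> ISO (a, b, c, l) (a', b', c', l').
Proof.
move=> ha hb hc hl ha' hb' hc' hl' hJ.
have [h0 h1 h3 hg hbt] := Jeq_Inv hq ha hb hc hl ha' hb' hc' hl' hJ.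
exists (tr q (a, b, c, l) (a', b', c', l')); split; last exact: tr1.
split; last exact: tr_bij.
split.
- exact: tr_lin.
- exact: trA.
- exact: (trB hq hq2 ha hb hc hl ha' hb' hc' hl' h0 h1 h3 hg hbt).
- exact: (trC hq hq2 ha hb hc hl ha' hb' hc' hl' h0 h1 h3 hg hbt).
Qed.

Lemma Jeq_sym r r' : Jeq q r r' -> Jeq q r' r.
Proof. by case=> *; split. Qed.

Lemma iso_hom r r' : ISO r r' -> HOM r r'.
Proof. by case=> f [[hf _] f1]; exists f. Qed.

End Final.

Unset Implicit Arguments.

Theorem theorem7p1 (F : closedFieldType) (q : F) (d : nat)
  (hq : d.-primitive_root q) (hd : [/\ d != 1%N, d != 2%N & d != 4%N])
  (a b c l a' b' c' l' : F)
  (ha : a != 0) (hb : b != 0) (hc : c != 0) (hl : l != 0)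
  (ha' : a' != 0) (hb' : b' != 0) (hc' : c' != 0) (hl' : l' != 0) :
  [<-> approx q (a, b, c, l) (a', b', c', l');
       exists f, is_hom q (a, b, c, l) (a', b', c', l') f /\ f 1 = 1;
       exists f, is_hom q (a', b', c', l') (a, b, c, l) f /\ f 1 = 1;
       exists f, is_iso q (a, b, c, l) (a', b', c', l') f /\ f 1 = 1;
       exists f, is_iso q (a', b', c', l') (a, b, c, l) f /\ f 1 = 1].
Proof.
have hd0 := prim_order_gt0 hq.
have hq0 : q != 0.
  apply/negP => /eqP q0; have := prim_expr_order hq.
  by rewrite q0 expr0n; case: d hq hd hd0 {q0} => // n _ _ _ /eqP; rewrite eq_sym oner_eq0.
have hq4 : q ^+ 4 != 1.
  apply/negP => /eqP h.
  have h4 : (d %| 4)%N by rewrite (prim_order_dvd hq) h.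
  move: hd0 hd h4 (@dvdn_leq d 4 isT h4); case: (d) => [|[|[|[|[|n]]]]] //=; by move=> _ [].
have hq41 : q ^+ 4 - 1 != 0 by rewrite subr_eq0.
have hqq1 : q * q - 1 != 0.
  apply/negP => /eqP h; move/eqP: hq41; apply.
  have -> : q ^+ 4 - 1 = (q * q - 1) * (q * q + 1) by ring.
  by rewrite h mul0r.
have hq2 : q * q + 1 != 0.
  apply/negP => /eqP h; move/eqP: hq41; apply.
  have -> : q ^+ 4 - 1 = (q * q - 1) * (q * q + 1) by ring.
  by rewrite h mulr0.
have hqm : q - q^-1 != 0.
  have -> : q - q^-1 = (q * q - 1) / q by field.
  by rewrite mulf_neq0 // invr_eq0.
have hkap : kap q != 0.
  have -> : kap q = (q ^+ 4 - 1) / q ^+ 2 by rewrite /kap; field.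
  by rewrite mulf_neq0 // invr_eq0 expf_neq0.
have nz : NZ (a, b, c, l) by split.
have nz' : NZ (a', b', c', l') by split.
tfae.
- move=> h; apply: iso_hom; apply: Jeq_iso => //.
  by case: (approx_Jeq hq0 h nz).
- move=> h; apply: iso_hom; apply: Jeq_iso => //.
  by apply: Jeq_sym; apply: hom_Jeq h.
- move=> h; apply: Jeq_iso => //.
  by apply: Jeq_sym; apply: hom_Jeq h.
- move=> h; apply: Jeq_iso => //.
  by apply: Jeq_sym; apply: hom_Jeq (iso_hom h).
- move=> h; apply: Jeq_approx => //.
  by apply: Jeq_sym; apply: hom_Jeq (iso_hom h).
Qed.
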